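(* Let $k$ be an algebraically closed field of characteristic $2$, $G=\mathrm{GL}(n,k)$ acting by conjugation on $\mathfrak g=\mathfrak{gl}(n,k)$, and $\mathcal N_1=\{x\in\mathfrak g:x^2=0\}$. Let $i$ be an integer with $n-2i\ge 2$, $i\ge 0$, and let $$e_i=\begin{pmatrix}0&0&I_i\\0&0&0\\0&0&0\end{pmatrix}$$ with diagonal blocks of sizes $i$, $n-2i$, $i$. Every element of the centralizer $\mathfrak z_{\mathfrak g}(e_i)$ has the block form $$x=\begin{pmatrix}A&B&C\\0&E&F\\0&0&A\end{pmatrix},\quad A,C\in\mathrm{Mat}_{i\times i},\ E\in\mathrm{Mat}_{(n-2i)\times(n-2i)},\ B\in\mathrm{Mat}_{i\times(n-2i)},\ F\in\mathrm{Mat}_{(n-2i)\times i}.$$ Let $V$ be an irreducible component of $\mathfrak z_{\mathfrak g}(e_i)\cap\mathcal N_1$, and suppose that some $x\in V$ has $E\neq 0$. Then $V$ is not contained in $\overline{G\cdot e_i}$.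
   Context: $\overline{G\cdot e_i}$ denotes the Zariski closure of the conjugacy class of $e_i$. *)

(* Defs.v *)
From HB Require Import structures.
From mathcomp Require Import all_boot all_order all_algebra.
Set Implicit Arguments. Unset Strict Implicit. Unset Printing Implicit Defensive.
Import GRing.Theory.
Local Open Scope ring_scope.

Definition mxset (k : fieldType) (n : nat) := 'M[k]_n -> Prop.

Section Zariski.
Variables (k : fieldType) (n : nat).

Definition msubset (A B : mxset k n) : Prop := forall x, A x -> B x.

Inductive polyfun : ('M[k]_n -> k) -> Prop :=
  | polyfun_cst (c : k) : polyfun (fun _ => c)
  | polyfun_coord (p q : 'I_n) : polyfun (fun x => x p q)
  | polyfun_add f g : polyfun f -> polyfun g -> polyfun (fun x => f x + g x)
  | polyfun_mul f g : polyfun f -> polyfun g -> polyfun (fun x => f x * g x).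

Definition zclosed (Z : mxset k n) : Prop :=
  exists P : ('M[k]_n -> k) -> Prop,
    (forall f, P f -> polyfun f) /\
    (forall x, Z x <-> (forall f, P f -> f x = 0)).

Definition zclosure (S : mxset k n) : mxset k n :=
  fun x => forall Z, zclosed Z -> msubset S Z -> Z x.

Definition zirreducible (Y : mxset k n) : Prop :=
  (exists y, Y y) /\
  forall Z1 Z2, zclosed Z1 -> zclosed Z2 ->
    msubset Y (fun x => Z1 x \/ Z2 x) -> msubset Y Z1 \/ msubset Y Z2.

Definition irr_component (V S : mxset k n) : Prop :=
  zirreducible V /\ msubset V S /\
  forall W, zirreducible W -> msubset V W -> msubset W S -> msubset W V.

Definition conj_orbit (e : 'M[k]_n) : mxset k n :=
  fun x => exists g : 'M[k]_n, g \in unitmx /\ x = g *m e *m invmx g.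

Definition centralizer (e : 'M[k]_n) : mxset k n :=
  fun x => x *m e = e *m x.

Definition nil1 : mxset k n := fun x => x *m x = 0.

End Zariski.

(* e_i : identity block I_i in the top-right corner, blocks of sizes i, n-2i, i
   (0-based: entry (p,q) is 1 iff p < i and q = p + (n - i)). *)
Definition e_mx (k : fieldType) (n i : nat) : 'M[k]_n :=
  \matrix_(p < n, q < n) (((p < i)%N && (nat_of_ord q == p + (n - i))%N :> bool)%:R : k).

(* the middle diagonal block E of x (rows and columns i .. n-i-1) is nonzero *)
Definition midblock_nonzero (k : fieldType) (n i : nat) (x : 'M[k]_n) : Prop :=
  exists p q : 'I_n, [/\ (i <= p)%N, (p < n - i)%N, (i <= q)%N, (q < n - i)%N
                        & x p q != 0].

(* Main.v *)
Require Import Defs.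
From HB Require Import structures.
From mathcomp Require Import all_boot all_order all_algebra all_fingroup.
From mathcomp Require Import zify.
From Stdlib Require Import FunctionalExtensionality Classical.
Set Implicit Arguments. Unset Strict Implicit. Unset Printing Implicit Defensive.
Import GRing.Theory.
Local Open Scope ring_scope.

Section PF.
Variables (k : fieldType) (n : nat).

Lemma polyfun_ext (f g : 'M[k]_n -> k) : (forall x, f x = g x) -> polyfun f -> polyfun g.
Proof. by move=> H; have -> : f = g by apply: functional_extensionality. Qed.

Lemma polyfun_sum (I : Type) (r : seq I) (P : pred I) (F : I -> 'M[k]_n -> k) :
  (forall j, polyfun (F j)) -> polyfun (fun x => \sum_(j <- r | P j) F j x).
Proof.
move=> HF; elim: r => [|a r IH].
  by apply: (polyfun_ext (f := fun _ => 0)) => [x|]; [rewrite big_nil|constructor].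
case Pa: (P a).
  apply: (polyfun_ext (f := fun x => F a x + \sum_(j <- r | P j) F j x)).
    by move=> x; rewrite big_cons Pa.
  by constructor.
by apply: polyfun_ext IH => x; rewrite big_cons Pa.
Qed.

Lemma polyfun_prod (I : Type) (r : seq I) (P : pred I) (F : I -> 'M[k]_n -> k) :
  (forall j, polyfun (F j)) -> polyfun (fun x => \prod_(j <- r | P j) F j x).
Proof.
move=> HF; elim: r => [|a r IH].
  by apply: (polyfun_ext (f := fun _ => 1)) => [x|]; [rewrite big_nil|constructor].
case Pa: (P a).
  apply: (polyfun_ext (f := fun x => F a x * \prod_(j <- r | P j) F j x)).
    by move=> x; rewrite big_cons Pa.
  by constructor.
by apply: polyfun_ext IH => x; rewrite big_cons Pa.
Qed.

Lemma polyfun_det m (F G : 'I_m -> 'I_n) :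
  polyfun (fun x : 'M[k]_n => \det (\matrix_(a, b) x (F a) (G b))).
Proof.
apply: (polyfun_ext (f := fun x => \sum_(s : 'S_m) ((-1) ^+ s * \prod_a x (F a) (G (s a))))).
  by move=> x; rewrite /determinant; apply: eq_bigr => s _; congr (_ * _); apply: eq_bigr => a _; rewrite mxE.
apply: polyfun_sum => s; apply: polyfun_mul; first exact: polyfun_cst.
by apply: polyfun_prod => a; apply: polyfun_coord.
Qed.

Lemma polyfun_shift f (w : 'M[k]_n) : polyfun f -> polyfun (fun v => f (v + w)).
Proof.
elim=> [c|p q|f1 g1 _ H1 _ H2|f1 g1 _ H1 _ H2]; try by constructor.
apply: (polyfun_ext (f := fun v => v p q + w p q)); first by move=> v; rewrite mxE.
by constructor; constructor.
Qed.

Lemma polyfun_line f (v w : 'M[k]_n) : polyfun f ->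
  exists p : {poly k}, forall t, f (v + t *: w) = p.[t].
Proof.
elim=> [c|p q|f1 g1 _ [p1 H1] _ [p2 H2]|f1 g1 _ [p1 H1] _ [p2 H2]].
- by exists c%:P => t; rewrite hornerC.
- exists ((v p q)%:P + (w p q)%:P * 'X) => t.
  by rewrite !mxE hornerD hornerM hornerX !hornerC mulrC.
- by exists (p1 + p2) => t; rewrite hornerD H1 H2.
- by exists (p1 * p2) => t; rewrite hornerM H1 H2.
Qed.

End PF.
Section E.
Variables (k : fieldType) (n i : nat).
Local Notation e := (e_mx k n i).

Lemma e_sq (hin : (i <= n - i)%N) : e *m e = 0.
Proof.
apply/matrixP => p q; rewrite !mxE big1 // => j _; rewrite !mxE.
case Hj: (j < i)%N; first last.
  by rewrite andFb mulr0.
have -> : (nat_of_ord j == p + (n - i))%N = false.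
  by apply/negbTE; apply: contraTneq Hj => ->; rewrite -leqNgt (leq_trans hin) // leq_addl.
by rewrite andbF mul0r.
Qed.

Lemma e_rank (hin : (i <= n)%N) : (\rank e <= i)%N.
Proof.
have -> : e = pid_mx i *m e.
  apply/matrixP => p q; rewrite [in RHS]mxE (bigD1 p) //= big1 => [|j /negbTE jp]; last first.
    rewrite !mxE (_ : (nat_of_ord p == j) = false) ?mul0r // eq_sym; exact: jp.
  rewrite !mxE eqxx /=; case: (p < i)%N => /=; by rewrite ?mul1r ?mul0r ?addr0.
by rewrite (leq_trans (mxrankM_maxl _ _)) // rank_pid_mx.
Qed.

Lemma det_schur m (A : 'M[k]_m) B C (D : 'M[k]_1) : D \in unitmx ->
  \det (block_mx A B C D) = \det (A - B *m invmx D *m C) * \det D.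
Proof.
move=> uD.
have H : block_mx A B C D *m block_mx 1%:M 0 (- (invmx D *m C)) 1%:M
   = block_mx (A - B *m invmx D *m C) B 0 D.
  by rewrite mulmx_block !mulmx1 !mulmx0 !add0r !mulmxN !mulmxA mulmxV // mul1mx subrr.

have := congr1 determinant H; rewrite det_mulmx det_lblock det_ublock !det1 !mulr1 => -> //.
Qed.
End E.
Section M.
Variables (k : fieldType) (n i : nat) (r c : 'I_n).
Hypotheses (ir : (i <= r)%N) (rn : (r < n - i)%N) (ic : (i <= c)%N) (cn : (c < n - i)%N).
Local Notation e := (e_mx k n i).

Definition Fr (a : 'I_(i + 1)) : 'I_n := if (a < i)%N then insubd r (val a) else r.
Definition Gc (b : 'I_(i + 1)) : 'I_n := if (b < i)%N then insubd c (n - i + b)%N else c.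
Definition Mx (x : 'M[k]_n) : 'M[k]_(i + 1) := \matrix_(a, b) x (Fr a) (Gc b).

Lemma Fr_lt (a : 'I_(i + 1)) : (a < i)%N -> nat_of_ord (Fr a) = a.
Proof. move=> ai; rewrite /Fr ai; move: (val_insubd r a) => /= ->; case: ifP => // /negbT; rewrite -leqNgt; have := ltn_ord r; move=> /= *; lia. Qed.
Lemma Gc_lt (b : 'I_(i + 1)) : (b < i)%N -> nat_of_ord (Gc b) = (n - i + b)%N.
Proof. move=> bi; rewrite /Gc bi; move: (val_insubd c (n - i + b)%N) => /= ->; case: ifP => // /negbT; rewrite -leqNgt; have := ltn_ord r; move=> /= *; lia. Qed.
Lemma Fr_ge (a : 'I_(i + 1)) : ~~ (a < i)%N -> Fr a = r.
Proof. by rewrite /Fr => /negbTE ->. Qed.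
Lemma Gc_ge (b : 'I_(i + 1)) : ~~ (b < i)%N -> Gc b = c.
Proof. by rewrite /Gc => /negbTE ->. Qed.

Lemma Mx_e : Mx e = block_mx 1%:M 0 0 0.
Proof.
apply/matrixP => a b; rewrite !mxE.
case: splitP => a' Ea; rewrite mxE; case: splitP => b' Eb; rewrite ?mxE.
- have ai : (a < i)%N by rewrite Ea.
  have bi : (b < i)%N by rewrite Eb.
  rewrite (Fr_lt ai) ai (Gc_lt bi) /= Ea Eb addnC eqn_add2r eq_sym //.
- have ai : (a < i)%N by rewrite Ea.
  have bi : ~~ (b < i)%N by rewrite Eb; lia.
  rewrite (Fr_lt ai) ai (Gc_ge bi) /=.
  have -> : (nat_of_ord c == a + (n - i))%N = false by apply/negbTE; lia.
  by [].
- have ai : ~~ (a < i)%N by rewrite Ea; lia.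
  by rewrite (Fr_ge ai) ltnNge ir.
- have ai : ~~ (a < i)%N by rewrite Ea; lia.
  by rewrite (Fr_ge ai) ltnNge ir.
Qed.

Lemma MxE x a b : Mx x a b = x (Fr a) (Gc b).
Proof. by rewrite mxE. Qed.

Lemma Mx_lin x w t : Mx (x + t *: w) = Mx x + t *: Mx w.
Proof. by apply/matrixP => a b; rewrite !mxE. Qed.

Lemma rank_Mx y : (\rank (Mx y) <= \rank y)%N.
Proof.
pose R : 'M[k]_(i + 1, n) := \matrix_(a, p) ((Fr a == p)%:R).
pose C : 'M[k]_(n, i + 1) := \matrix_(q, b) ((q == Gc b)%:R).
have -> : Mx y = R *m y *m C.
  apply/matrixP => a b; rewrite [RHS]mxE (bigD1 (Gc b)) //= big1 => [|q /negbTE qb]; last first.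
    by rewrite [C _ _]mxE qb mulr0.
  rewrite [C _ _]mxE eqxx mulr1 addr0 [in RHS]mxE (bigD1 (Fr a)) //= big1 => [|p /negbTE pa]; last first.
    by rewrite [R _ _]mxE eq_sym pa mul0r.
  by rewrite [R _ _]mxE eqxx mul1r addr0 mxE.
by rewrite (leq_trans (mxrankM_maxl _ _)) // mxrankM_maxr.
Qed.
End M.
Lemma nonsing_shift (k : closedFieldType) m (K : 'M[k]_m) :
  exists t : k, \det (t%:M - K) != 0.
Proof.
have [t nr] := closed_nonrootP (char_poly K) (monic_neq0 (char_poly_monic K)).
exists t; apply/negP => /det0P [v v0 vK].
move: nr; rewrite -eigenvalue_root_char => /negP; apply; apply/eigenvalueP.
exists v => //; apply/eqP; rewrite eq_sym -subr_eq0 -mul_mx_scalar -mulmxBr.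
by apply/eqP.
Qed.

Theorem mainTheorem5 (k : closedFieldType) (n i : nat)
  (chark : (2 \in [pchar k])%N) (hni : (2 <= n - 2 * i)%N)
  (V : mxset k n)
  (hV : irr_component V (fun x => centralizer (e_mx k n i) x /\ nil1 x))
  (hE : exists x, V x /\ midblock_nonzero i x) :
  ~ msubset V (zclosure (conj_orbit (e_mx k n i))).
Proof.
set e := e_mx k n i.
move: hV => [[[v0 Vv0] irrV] [VS maxV]].
case: hE => x0 [Vx0 [r [c [ir rn ic cn x0rc]]]].
move=> Vcl.
have hin : (i <= n - i)%N by lia.
pose W : mxset k n := fun y => exists v t, V v /\ y = v + t *: e.
have VW : msubset V W by move=> v Vv; exists v, 0; rewrite scale0r addr0.
have WS : msubset W (fun x => centralizer e x /\ nil1 x).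
  move=> y [v [t [Vv ->]]]; have [cv nv] := VS v Vv; split.
    by rewrite /centralizer mulmxDl mulmxDr -scalemxAl -scalemxAr cv.
  rewrite /nil1 mulmxDl !mulmxDr -!scalemxAl -!scalemxAr nv.
  rewrite /centralizer in cv; rewrite cv e_sq // !scaler0 addr0 add0r -scalerDr.
  by rewrite -mulr2n -scaler_nat (pcharf0 chark) scale0r scaler0.
have irrW : zirreducible W.
  split; first by exists v0; apply: VW.
  move=> Z1 Z2 [P1 [hP1 eZ1]] [P2 [hP2 eZ2]] WZ.
  have shiftC : forall (Z : mxset k n) P, (forall f, P f -> polyfun f) ->
      (forall x, Z x <-> (forall f, P f -> f x = 0)) -> forall t,
      zclosed (fun v => Z (v + t *: e)).
    move=> Z P hP eZ t.
    exists (fun h => exists f, P f /\ h = fun v => f (v + t *: e)); split.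
      by move=> h [f [Pf ->]]; apply: polyfun_shift; apply: hP.
    move=> x; split.
      by move=> Zx h [f [Pf ->]]; exact: (proj1 (eZ (x + t *: e)) Zx f Pf).
    by move=> H; apply/eZ => f Pf; exact: (H (fun v => f (v + t *: e)) (ex_intro _ f (conj Pf erefl))).
  have claim : forall t, msubset V (fun v => Z1 (v + t *: e)) \/
                         msubset V (fun v => Z2 (v + t *: e)).
    move=> t; apply: irrV; [exact: shiftC hP1 eZ1 t | exact: shiftC hP2 eZ2 t|].
    by move=> v Vv; apply: WZ; exists v, t.
  have getp : forall (Z : mxset k n) P, (forall f, P f -> polyfun f) ->
      (forall x, Z x <-> (forall f, P f -> f x = 0)) ->
      ~ (forall t, msubset V (fun v => Z (v + t *: e))) ->
      exists v f (p : {poly k}), [/\ V v, P f, p != 0 &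
         forall t, f (v + t *: e) = p.[t]].
    move=> Z P hP eZ H.
    have [t1 Ht1] := not_all_ex_not _ _ H.
    have [v1 [Vv1 nZ]] : exists v, V v /\ ~ Z (v + t1 *: e).
      by apply: NNPP => H'; apply: Ht1 => v Vv; apply: NNPP => nz; apply: H'; exists v.
    have [f1 [Pf1 nf1]] : exists f, P f /\ f (v1 + t1 *: e) <> 0.
      by apply: NNPP => H'; apply: nZ; apply/eZ => f Pf; apply: NNPP => nf; apply: H'; exists f.
    have [p1 Hp1] := polyfun_line v1 e (hP _ Pf1).
    exists v1, f1, p1; split => //.
    by apply/eqP => p10; apply: nf1; rewrite Hp1 p10 horner0.
  case: (classic (forall t, msubset V (fun v => Z1 (v + t *: e)))) => [H1|H1].
    by left => y [v [t [Vv ->]]]; apply: H1.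
  case: (classic (forall t, msubset V (fun v => Z2 (v + t *: e)))) => [H2|H2].
    by right => y [v [t [Vv ->]]]; apply: H2.
  have [v1 [f1 [p1 [Vv1 Pf1 p1n Hp1]]]] := getp _ _ hP1 eZ1 H1.
  have [v2 [f2 [p2 [Vv2 Pf2 p2n Hp2]]]] := getp _ _ hP2 eZ2 H2.
  have [t nr] := closed_nonrootP (p1 * p2) (mulf_neq0 p1n p2n).
  move: nr; rewrite /root hornerM mulf_eq0 negb_or => /andP [n1 n2].
  case: (claim t) => HV.
    by move: n1; rewrite -Hp1 (proj1 (eZ1 _) (HV _ Vv1) _ Pf1) eqxx.
  by move: n2; rewrite -Hp2 (proj1 (eZ2 _) (HV _ Vv2) _ Pf2) eqxx.
have WV := maxV W irrW VW WS.
pose Z : mxset k n := fun x => \det (Mx i r c x) = 0.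
have hZ : zclosed Z.
  exists (fun h => h = fun x => \det (Mx i r c x)); split.
    by move=> h ->; apply: polyfun_det.
  by move=> x; split => [Zx h -> // | H]; exact: (H _ erefl).
have horb : msubset (conj_orbit e) Z.
  move=> y [g [_ ->]]; apply/eqP; apply: contraT => nz.
  have := rank_Mx i r c (g *m e *m invmx g).
  rewrite mxrank_unit ?unitmxE ?unitfE //.
  have := mxrankM_maxl (g *m e) (invmx g).
  have := mxrankM_maxr g e.
  have := e_rank k (n := n) (i := i) ltac:(lia).
  rewrite -/e; lia.
have key : forall t, \det (Mx i r c (x0 + t *: e)) = 0.
  move=> t; apply: (Vcl _ (WV _ _) Z hZ horb).
  by exists x0, t.
have DS : \det (drsubmx (Mx i r c x0)) = x0 r c.
  by rewrite det_mx11 !mxE Fr_ge ?Gc_ge //= addn0 ltnn.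
set S := Mx i r c x0.
have uD : drsubmx S \in unitmx by rewrite unitmxE unitfE DS.
have [t nz] := nonsing_shift (ursubmx S *m invmx (drsubmx S) *m dlsubmx S - ulsubmx S).
have := key t.
rewrite Mx_lin (Mx_e k ir rn ic cn) -/S -(submxK S) scale_block_mx add_block_mx !scaler0 !addr0 scalemx1.
rewrite det_schur // DS.
move/eqP; rewrite mulf_eq0 (negbTE x0rc) orbF.
suff -> : ulsubmx S + t%:M - ursubmx S *m invmx (drsubmx S) *m dlsubmx S =
   t%:M - (ursubmx S *m invmx (drsubmx S) *m dlsubmx S - ulsubmx S).
  by rewrite (negbTE nz).
by rewrite opprB addrA (addrC (ulsubmx S)) addrAC.
Qed.
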